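(* Let $\mathcal L$ be a finite language consisting of relation and/or constant symbols, and let $\mathcal H$ be a non-trivial basic hereditary $\mathcal L$-property. Then there are $k\in\mathbb N$ and polynomials $p_1,\dots,p_k$ with rational coefficients such that $|\mathcal H_n|=\sum_{i=1}^k p_i(n)i^n$ for all sufficiently large $n$.
   Context: A hereditary $\mathcal L$-property is a class $\mathcal H$ of $\mathcal L$-structures (finite or infinite) closed under isomorphism and under substructures (a substructure contains the interpretations of all constants). $\mathcal H_n$ is the set of members of $\mathcal H$ with underlying set $[n]$. $\mathcal H$ is trivial if $\mathcal H_n=\emptyset$ for all sufficiently large $n$. For an $\mathcal L$-structure $\mathcal M$ and $a,b\in M$, write $a\sim b$ iff the permutation of $M$ exchanging $a$ and $b$ and fixing all other elements is an automorphism of $\mathcal M$ (equivalently, $ab$ and $ba$ have the same quantifier-free type over $M\setminus\{a,b\}$); this is an equivalence relation. $\mathcal H$ is basic if there is $k\in\mathbb N$ such that every member of $\mathcal H$ has at most $k$ distinct $\sim$-classes. *)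

(* Defs.v *)
From HB Require Import structures.
From mathcomp Require Import all_boot all_order all_algebra.
From Stdlib Require Import ClassicalEpsilon.
Set Implicit Arguments. Unset Strict Implicit. Unset Printing Implicit Defensive.

Record lang := Lang {
  rsym : finType;
  ar : rsym -> nat;
  csym : finType }.

Section Structures.
Variable L : lang.

Definition atom (T : Type) := {r : rsym L & (ar r).-tuple T}.

Record struct (T : Type) := Struct {
  rel : atom T -> bool;
  cst : csym L -> T }.

Definition map_atom (T U : Type) (f : T -> U) (a : atom T) : atom U :=
  Tagged (fun r => (ar r).-tuple U) (map_tuple f (tagged a)).

Definition is_iso (T U : Type) (M : struct T) (N : struct U) (f : T -> U) :=
  bijective f /\
  (forall a : atom T, rel N (map_atom f a) = rel M a) /\
  (forall c, cst N c = f (cst M c)).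

(* N is the substructure of M induced on the subset P (the existence of the
   constants of N forces P to contain all interpretations of constants). *)
Definition induced (T : Type) (M : struct T) (P : T -> Prop)
    (N : struct {x : T | P x}) :=
  (forall a, rel N a = rel M (map_atom (@proj1_sig T P) a)) /\
  (forall c, proj1_sig (cst N c) = cst M c).

Definition property := forall T : Type, struct T -> Prop.

Definition hereditary (H : property) :=
  (forall T U (M : struct T) (N : struct U) f,
      H T M -> is_iso M N f -> H U N) /\
  (forall T (M : struct T) (P : T -> Prop) (N : struct {x : T | P x}),
      H T M -> @induced T M P N -> H _ N).

Definition sim (T : Type) (M : struct T) (a b : T) :=
  exists s : T -> T,
    [/\ s a = b, s b = a, (forall x, x <> a -> x <> b -> s x = x)
      & is_iso M M s].

Definition at_most_classes (T : Type) (M : struct T) (k : nat) :=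
  exists s : seq T, size s <= k /\
    forall x, exists y, List.In y s /\ sim M x y.

Definition basic (H : property) :=
  exists k, forall T (M : struct T), H T M -> at_most_classes M k.

(* Finite structures with underlying set [n] = 'I_n, encoded as a finType. *)
Definition fstruct (n : nat) : finType :=
  ({ffun atom 'I_n -> bool} * {ffun csym L -> 'I_n})%type.

Definition of_fstruct n (s : fstruct n) : struct 'I_n :=
  Struct (fun a => s.1 a) (fun c => s.2 c).

Definition asbool (P : Prop) : bool :=
  if excluded_middle_informative P then true else false.

Definition Hcard (H : property) (n : nat) : nat :=
  #|[set s : fstruct n | asbool (H _ (of_fstruct s))]|.

Definition trivial (H : property) :=
  exists N, forall n, N <= n -> forall s : fstruct n, ~ H _ (of_fstruct s).

End Structures.

(* Main.v *)
From Pilot Require Import Defs.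
From HB Require Import structures.
From mathcomp Require Import all_boot all_order all_algebra.
From mathcomp Require Import fingroup perm zify ring.
From Stdlib Require Import ClassicalEpsilon FunctionalExtensionality Classical.
Import Pilot.Defs.
Set Implicit Arguments. Unset Strict Implicit. Unset Printing Implicit Defensive.

Module M1.

Section Basics.
Variable L : lang.

Lemma map_atom_comp T U V (f : T -> U) (g : U -> V) (a : atom L T) :
  map_atom g (map_atom f a) = map_atom (g \o f) a.
Proof.
case: a => r t; rewrite /map_atom /=; congr (Tagged _ _).
by apply: val_inj; rewrite /= map_comp.
Qed.

Lemma map_atom_ext T U (f g : T -> U) (a : atom L T) :
  f =1 g -> map_atom f a = map_atom g a.
Proof.
move=> fg; case: a => r t; rewrite /map_atom /=; congr (Tagged _ _).
by apply: val_inj; rewrite /=; apply: eq_map.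
Qed.

Lemma map_atom_ext_in (T : eqType) U (f g : T -> U) (a : atom L T) :
  {in tagged a, f =1 g} -> map_atom f a = map_atom g a.
Proof.
case: a => r t /= fg; rewrite /map_atom /=; congr (Tagged _ _).
by apply: val_inj; rewrite /=; apply/eq_in_map.
Qed.

Lemma map_atom_id T (a : atom L T) : map_atom id a = a.
Proof.
case: a => r t; rewrite /map_atom /=; congr (Tagged _ _).
by apply: val_inj; rewrite /= map_id.
Qed.

Lemma is_iso_ext T U (M : struct L T) (N : struct L U) f g :
  f =1 g -> is_iso M N f -> is_iso M N g.
Proof.
move=> fg [bf [hr hc]]; split; first exact: (eq_bij bf fg).
split=> [a|c]; last by rewrite -fg.
by rewrite -(map_atom_ext a fg).
Qed.

Lemma is_iso_comp T U V (M : struct L T) (N : struct L U) (P : struct L V) f g :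
  is_iso M N f -> is_iso N P g -> is_iso M P (g \o f).
Proof.
move=> [bf [hf cf]] [bg [hg cg]]; split; first exact: bij_comp.
split=> [a|c]; last by rewrite cg cf.
by rewrite -map_atom_comp hg hf.
Qed.

Lemma is_iso_inv T U (M : struct L T) (N : struct L U) f g :
  cancel f g -> cancel g f -> is_iso M N f -> is_iso N M g.
Proof.
move=> fK gK [bf [hf cf]]; split; first by exists f.
split=> [a|c]; last by rewrite cf fK.
by rewrite -hf map_atom_comp (map_atom_ext a (g := id)) ?map_atom_id.
Qed.

Lemma is_iso_id T (M : struct L T) : is_iso M M id.
Proof.
split; first by exists id.
by split=> // a; rewrite map_atom_id.
Qed.

Section OnOrd.
Variable n : nat.
Implicit Types (M : struct L 'I_n).

Lemma simP M x y : sim M x y <-> is_iso M M (tperm x y).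
Proof.
split.
  case=> s [sx sy so iso]; apply: is_iso_ext iso => z.
  by case: (tpermP x y z) => [->|->|zx zy] //; rewrite so.
move=> iso; exists (tperm x y); split => //.
- by rewrite tpermL.
- by rewrite tpermR.
- by move=> z zx zy; rewrite tpermD // eq_sym; apply/eqP.
Qed.

Lemma sim_refl M x : sim M x x.
Proof. by apply/simP; rewrite tperm1; apply: is_iso_ext (is_iso_id M) => z; rewrite perm1. Qed.

Lemma sim_sym M x y : sim M x y -> sim M y x.
Proof. by move/simP; rewrite tpermC => /simP. Qed.

Lemma sim_trans M x y z : sim M x y -> sim M y z -> sim M x z.
Proof.
case: (eqVneq x y) => [<-|nxy] //.
case: (eqVneq y z) => [<-|nyz] //.
case: (eqVneq x z) => [<- _ _|nxz]; first exact: sim_refl.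
move=> /simP hxy /simP hyz; apply/simP.
have E : (tperm x y \o tperm y z \o tperm x y) =1 (tperm x z).
  move=> w /=.
  have ne : forall a b : 'I_n, a != b -> b != a by move=> a b; rewrite eq_sym.
  case: (tpermP x y w) => [->|->|wx wy].
  - by rewrite tpermL tpermL tpermD // ne.
  - by rewrite (tpermD (x:=y)) ?tpermL ?tpermD // ne.
  - case: (tpermP y z w) => [wy'|wz|wy' wz]; first by case: wy.
    + by rewrite wz tpermR tpermR.
    + have h1 : x != w by apply/eqP=> h; apply: wx; rewrite h.
      have h2 : y != w by apply/eqP=> h; apply: wy; rewrite h.
      have h3 : z != w by apply/eqP=> h; apply: wz; rewrite h.
      by rewrite !tpermD.
apply: (is_iso_ext E).
exact: is_iso_comp (is_iso_comp hxy hyz) hxy.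
Qed.

End OnOrd.
End Basics.

End M1.
Import M1.

Module M2.

Lemma index_map_in (T U : eqType) (f : T -> U) (t s : seq T) x :
  {in t &, injective f} -> {subset s <= t} -> x \in t ->
  index (f x) (map f s) = index x s.
Proof.
move=> finj; elim: s => [//|y s IH] sub xt /=.
case: (eqVneq y x) => [->|nyx]; first by rewrite eqxx.
have -> : (f y == f x) = false.
  apply/negbTE/eqP=> e; move/eqP: nyx; apply.
  by apply: finj => //; apply: sub; rewrite inE eqxx.
by rewrite IH // => z zs; apply: sub; rewrite inE zs orbT.
Qed.

Lemma count_le_in (T : eqType) (P Q : pred T) (t : seq T) :
  {in t, forall z, Q z -> P z} -> count Q t <= count P t.
Proof.
elim: t => [//|y t IH] sub /=.
have h : count Q t <= count P t by apply: IH => w wt; apply: sub; rewrite inE wt orbT.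
case Qy: (Q y); last by rewrite add0n; apply: (leq_trans h); apply: leq_addl.
by rewrite (sub y) ?inE ?eqxx // add1n add1n ltnS.
Qed.

Lemma count_lt (T : eqType) (P Q : pred T) (t : seq T) :
  {in t, forall z, Q z -> P z} -> (exists2 z, z \in t & P z && ~~ Q z) ->
  count Q t < count P t.
Proof.
elim: t => [|y t IH] sub [z]; first by [].
rewrite inE => /orP [/eqP ->|zt] /andP [Pz nQz] /=.
- rewrite (negbTE nQz) Pz add0n add1n ltnS.
  by apply: count_le_in => w wt; apply: sub; rewrite inE wt orbT.
- have h : count Q t < count P t.
    by apply: IH; [move=> w wt; apply: sub; rewrite inE wt orbT| exists z => //; rewrite Pz].
  case Qy: (Q y); last by rewrite add0n; apply: (leq_trans h); apply: leq_addl.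
  by rewrite (sub y) ?inE ?eqxx // add1n add1n ltnS.
Qed.

Section Shapes.
Variable L : lang.
Variable j : nat.

Definition mkat T r (t : (ar r).-tuple T) : atom L T :=
  Tagged (fun r => (ar r).-tuple T) t.

Definition shape n (chi : 'I_n -> 'I_j) (t : seq 'I_n) : seq ('I_j * nat) :=
  [seq (chi x, index x t) | x <- t].

Lemma size_shape n (chi : 'I_n -> 'I_j) t : size (shape chi t) = size t.
Proof. by rewrite size_map. Qed.

Lemma shape_map n n' (chi : 'I_n -> 'I_j) (chi' : 'I_n' -> 'I_j) (f : 'I_n -> 'I_n') t :
  {in t &, injective f} -> {in t, forall x, chi' (f x) = chi x} ->
  shape chi' (map f t) = shape chi t.
Proof.
move=> finj fchi; rewrite /shape -map_comp; apply/eq_in_map => x xt /=.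
by rewrite fchi // (index_map_in finj).
Qed.

Lemma shape_nth n (chi : 'I_n -> 'I_j) t p x0 :
  p < size t -> nth (chi x0, 0) (shape chi t) p = (chi (nth x0 t p), index (nth x0 t p) t).
Proof. by move=> pt; rewrite (nth_map x0). Qed.

Lemma shape_inj n n' (chi : 'I_n -> 'I_j) (chi' : 'I_n' -> 'I_j) t t' (x0 : 'I_n') :
  shape chi t = shape chi' t' ->
  exists f : 'I_n -> 'I_n',
    [/\ map f t = t', {in t &, injective f} & {in t, forall x, chi' (f x) = chi x}].
Proof.
move=> sh.
have sz : size t = size t' by rewrite -(size_shape chi) sh size_shape.
have K : forall p, p < size t -> forall y0 : 'I_n,
    chi (nth y0 t p) = chi' (nth x0 t' p) /\ index (nth y0 t p) t = index (nth x0 t' p) t'.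
  move=> p pt y0.
  have := congr1 (fun s => nth (chi y0, 0) s p) sh.
  rewrite /= shape_nth // (nth_map x0) -?sz // => -[-> ->].
  by split.
exists (fun x => nth x0 t' (index x t)); split.
- apply: (@eq_from_nth _ x0); first by rewrite size_map.
  move=> p; rewrite size_map => pt.
  have y0 : 'I_n by case: (t) pt => [//|y _ _]; exact: y.
  rewrite (nth_map y0) //.
  have [_ ->] := K p pt y0.
  by rewrite nth_index // mem_nth // -sz.
- move=> x y xt yt /= e.
  have px : index x t < size t by rewrite index_mem.
  have py : index y t < size t by rewrite index_mem.
  have [_ Kx] := K _ px x; have [_ Ky] := K _ py x.
  rewrite (nth_index x xt) in Kx; rewrite (nth_index x yt) in Ky.
  rewrite -(nth_index x xt) -(nth_index x yt); congr nth.
  by rewrite Kx Ky e.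
- move=> x xt /=.
  have px : index x t < size t by rewrite index_mem.
  have [Kc _] := K _ px x; rewrite (nth_index x xt) in Kc.
  by rewrite Kc.
Qed.

Definition Symm n (chi : 'I_n -> 'I_j) (M : struct L 'I_n) :=
  forall x y, chi x = chi y -> sim M x y.

Lemma Symm_map n (chi : 'I_n -> 'I_j) (M : struct L 'I_n) : Symm chi M ->
  forall (a : atom L 'I_n) (f : 'I_n -> 'I_n),
  {in tagged a &, injective f} -> {in tagged a, forall x, chi (f x) = chi x} ->
  rel M (map_atom f a) = rel M a.
Proof.
move=> sym a f.
move: (leqnn (count (fun x => f x != x) (tagged a))).
move: {2}(count _ _) => k.
elim: k a f => [|k IH] a f hk finj fchi.
  rewrite (map_atom_ext_in (g := id)) ?map_atom_id // => x xa /=.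
  apply/eqP; move: hk; rewrite leqn0 -(negbK (_ == 0)) -lt0n -has_count => /hasPn.
  by move/(_ x xa); rewrite negbK.
case: (boolP (has (fun x => f x != x) (tagged a))) => [/hasP [x xa fx]|hn]; last first.
  rewrite (map_atom_ext_in (g := id)) ?map_atom_id // => z za /=.
  by apply/eqP; move/hasPn: hn => /(_ z za); rewrite negbK.
set y := f x.
have cxy : chi x = chi y by rewrite /y fchi.
have /simP iso := sym x y cxy.
have hs : rel M (map_atom (tperm x y) a) = rel M a by case: iso => _ [-> _].
have ya : {in tagged a, forall z, f z = z -> z != x /\ z != y}.
  move=> z za fz; split; apply/eqP => ez.
    by move: fx; rewrite -ez fz eqxx.
  have : f z = f x by rewrite fz ez.
  by move/(finj _ _ za xa) => ezx; move: fx; rewrite -ezx fz eqxx.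
have e : map_atom f a = map_atom (f \o tperm x y) (map_atom (tperm x y) a).
  by rewrite map_atom_comp; apply: map_atom_ext => z /=; rewrite tpermK.
rewrite e IH ?hs //.
- case: a hk finj fchi fx xa ya hs e => r t /= hk finj fchi fx xa ya hs e.
  rewrite count_map -ltnS; apply: leq_trans hk.
  apply: count_lt.
    move=> z zt /=; rewrite tpermK; apply: contraNN => /eqP fz.
    have [h1 h2] := ya z zt fz; rewrite tpermD; [by rewrite fz | by rewrite eq_sym | by rewrite eq_sym].
  by exists x => //=; rewrite tpermK fx tpermL eqxx.
- case: a hk finj fchi fx xa ya hs e => r t /= hk finj fchi fx xa ya hs e.
  move=> u v /mapP [z zt ->] /mapP [w wt ->] /=; rewrite !tpermK => /(finj _ _ zt wt) ->.
  by [].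
- case: a hk finj fchi fx xa ya hs e => r t /= hk finj fchi fx xa ya hs e.
  move=> u /mapP [z zt ->] /=; rewrite tpermK fchi //.
  by case: (tpermP x y z) => [->|->|].
Qed.

Lemma Symm_shape n (chi : 'I_n -> 'I_j) (M : struct L 'I_n) : Symm chi M ->
  forall r (t t' : (ar r).-tuple 'I_n), shape chi t = shape chi t' ->
  rel M (mkat t) = rel M (mkat t').
Proof.
move=> sym r t t' sh.
case E: (val t') => [|x0 s].
  have : val t = val t' by rewrite E; apply/eqP; rewrite -size_eq0 size_tuple -(size_tuple t') E.
  by move/val_inj ->.
have [f [ft finj fchi]] := shape_inj x0 sh.
have -> : mkat t' = map_atom f (mkat t).
  by rewrite /map_atom /mkat /=; congr (Tagged _ _); apply: val_inj => /=.
by rewrite (Symm_map sym).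
Qed.

Lemma Symm_cst n (chi : 'I_n -> 'I_j) (M : struct L 'I_n) : Symm chi M ->
  forall c x, chi x = chi (cst M c) -> x = cst M c.
Proof.
move=> sym c x cx; have /simP [_ [_ h]] := sym _ _ cx.
by move: (h c); rewrite tpermR.
Qed.

Lemma shape_Symm n (chi : 'I_n -> 'I_j) (M : struct L 'I_n) :
  (forall r (t t' : (ar r).-tuple 'I_n), shape chi t = shape chi t' ->
     rel M (mkat t) = rel M (mkat t')) ->
  (forall c x, chi x = chi (cst M c) -> x = cst M c) -> Symm chi M.
Proof.
move=> hr hc x y cxy; apply/simP; split; first by exists (tperm x y); apply: tpermK.
split.
  case=> r t; rewrite /map_atom /=.
  have := hr r (map_tuple (tperm x y) t) t; rewrite /mkat => -> //=.
  apply: shape_map; first by move=> u v _ _; apply: perm_inj.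
  by move=> z _; case: (tpermP x y z) => [->|->|].
move=> c.
case: (eqVneq x (cst M c)) => [ex|nx].
  have ey := hc c y; rewrite -ex -cxy in ey; rewrite -(ey erefl) -ex.
  by rewrite tperm1 perm1.
case: (eqVneq y (cst M c)) => [ey|ny].
  have ex := hc c x; rewrite -ey cxy in ex; by move: nx; rewrite (ex erefl) ey eqxx.
by rewrite tpermD // eq_sym.
Qed.

End Shapes.

End M2.
Import M2.

Module M3.

Section Realize.
Variable j : nat.

Definition sz n (chi : 'I_n -> 'I_j) (i : 'I_j) := #|[pred x | chi x == i]|.

Definition ncl n (chi : 'I_n -> 'I_j) (t : seq 'I_n) (i : 'I_j) :=
  size [seq x <- undup t | chi x == i].

Lemma ncl_sz n (chi : 'I_n -> 'I_j) t i : ncl chi t i <= sz chi i.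
Proof.
rewrite /ncl /sz cardE; apply: uniq_leq_size; first by rewrite filter_uniq ?undup_uniq.
by move=> x; rewrite mem_filter mem_enum inE => /andP [].
Qed.

Lemma ncl_size n (chi : 'I_n -> 'I_j) t i : ncl chi t i <= size t.
Proof.
rewrite /ncl size_filter; exact: leq_trans (count_size _ _) (size_undup _).
Qed.

Lemma realize n n' (chi : 'I_n -> 'I_j) (chi' : 'I_n' -> 'I_j) (t : seq 'I_n) :
  (forall i, ncl chi t i <= sz chi' i) ->
  exists t' : seq 'I_n', shape chi' t' = shape chi t.
Proof.
case: t => [|p t0] hcl; first by exists [::].
set t := p :: t0.
have [x0 _] : exists x0 : 'I_n', chi' x0 == chi p.
  have : 0 < sz chi' (chi p).
    apply: leq_trans (hcl (chi p)); rewrite /ncl lt0n size_eq0.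
    apply/eqP => /(congr1 (fun s => p \in s)); rewrite mem_filter eqxx mem_undup inE eqxx.
    by [].
  by rewrite /sz lt0n => /existsP[x hx]; exists x.
pose f (x : 'I_n) := nth x0 (enum [pred y | chi' y == chi x])
   (index x [seq z <- undup t | chi z == chi x]).
have hf : forall x, x \in t ->
    index x [seq z <- undup t | chi z == chi x] < size (enum [pred y | chi' y == chi x]).
  move=> x xt; rewrite -cardE; apply: leq_trans (hcl (chi x)).
  by rewrite /ncl index_mem mem_filter eqxx mem_undup.
have fchi : {in t, forall x, chi' (f x) = chi x}.
  move=> x xt; apply/eqP.
  by have := mem_nth x0 (hf x xt); rewrite mem_enum inE.
exists (map f t); apply: shape_map => // x y xt yt e.
have cxy : chi x = chi y by rewrite -fchi // e fchi.
have hx := hf x xt; have hy := hf y yt; rewrite cxy in hx.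
move/eqP: e; rewrite /f cxy nth_uniq ?enum_uniq // => /eqP e.
  have xt' : x \in [seq z <- undup t | chi z == chi y] by rewrite mem_filter cxy eqxx mem_undup.
  have yt' : y \in [seq z <- undup t | chi z == chi y] by rewrite mem_filter eqxx mem_undup.
  by rewrite -(nth_index x xt') e nth_index.
Qed.

Lemma shape_swap n n' (chi : 'I_n -> 'I_j) (chi' : 'I_n' -> 'I_j) t t' x y x' y' :
  shape chi (t ++ [:: x; y]) = shape chi' (t' ++ [:: x'; y']) ->
  shape chi (map (tperm x y) t) = shape chi' (map (tperm x' y') t').
Proof.
move=> sh; have [f [E finj fchi]] := shape_inj x' sh.
have sz : size t = size t'.
  by have := congr1 size sh; rewrite !size_shape !size_cat /= !addn2 => -[].
have Et : map f t = t'.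
  by have := congr1 (take (size t)) E; rewrite map_cat !take_size_cat ?size_map.
have Exy : [:: f x; f y] = [:: x'; y'].
  by have := congr1 (drop (size t)) E; rewrite map_cat !drop_size_cat ?size_map.
case: Exy => fx fy.
have inu : forall z, z \in t ++ [:: x; y] -> tperm x y z \in t ++ [:: x; y].
  move=> z zu; case: (tpermP x y z) => [_|_|_ _ //]; by rewrite mem_cat !inE eqxx !orbT.
rewrite -Et -map_comp.
have -> : map (tperm x' y' \o f) t = map (f \o tperm x y) t.
  apply/eq_in_map => z zt /=.
  have zu : z \in t ++ [:: x; y] by rewrite mem_cat zt.
  have xu : x \in t ++ [:: x; y] by rewrite mem_cat !inE eqxx orbT.
  have yu : y \in t ++ [:: x; y] by rewrite mem_cat !inE eqxx !orbT.
  case: (tpermP x y z) => [->|->|zx zy]; first by rewrite fx tpermL.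
    by rewrite fy tpermR.
  rewrite tpermD //.
    by apply/eqP => h; apply: zx; apply: finj => //; rewrite fx h.
  by apply/eqP => h; apply: zy; apply: finj => //; rewrite fy h.
rewrite map_comp; symmetry; apply: shape_map.
- move=> u v /mapP [a at' ->] /mapP [b bt ->]; apply: finj; apply: inu; by rewrite mem_cat ?at' ?bt.
- by move=> u /mapP [a at' ->]; rewrite fchi //; apply: inu; rewrite mem_cat at'.
Qed.

End Realize.

End M3.
Import M3.

Module M4.

Lemma asboolP (P : Prop) : reflect P (asbool P).
Proof. rewrite /asbool; case: excluded_middle_informative => h; by constructor. Qed.

Lemma asbool_iff (P Q : Prop) : (P <-> Q) -> asbool P = asbool Q.
Proof. by move=> [pq qp]; apply/asboolP/asboolP. Qed.

Section Corr.
Variable L : lang.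
Variable j : nat.

Definition maxar := \max_(x : rsym L) @ar L x.
Definition RR := (maxar + 2)%N.

Lemma ar_le (r0 : rsym L) : ar r0 <= maxar.
Proof. exact: (leq_bigmax (F := @ar L)). Qed.

Local Notation M := (@of_fstruct L _).

Definition capeq n n' (chi : 'I_n -> 'I_j) (chi' : 'I_n' -> 'I_j) :=
  forall i, minn (sz chi i) RR = minn (sz chi' i) RR.

Definition Corr n n' (chi : 'I_n -> 'I_j) (chi' : 'I_n' -> 'I_j)
    (s : fstruct L n) (s' : fstruct L n') :=
  (forall r0 (t : (ar r0).-tuple 'I_n) (t' : (ar r0).-tuple 'I_n'),
      shape chi t = shape chi' t' -> s.1 (mkat t) = s'.1 (mkat t')) /\
  (forall c, chi (s.2 c) = chi' (s'.2 c)).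

Lemma capeq_sym n n' (chi : 'I_n -> 'I_j) (chi' : 'I_n' -> 'I_j) :
  capeq chi chi' -> capeq chi' chi.
Proof. by move=> h i. Qed.

Lemma capeq_trans n n' n'' (chi : 'I_n -> 'I_j) (chi' : 'I_n' -> 'I_j) (chi'' : 'I_n'' -> 'I_j) :
  capeq chi chi' -> capeq chi' chi'' -> capeq chi chi''.
Proof. by move=> h h' i; rewrite h h'. Qed.

Lemma Corr_sym n n' (chi : 'I_n -> 'I_j) (chi' : 'I_n' -> 'I_j) s s' :
  Corr chi chi' s s' -> Corr chi' chi s' s.
Proof.
by move=> [h1 h2]; split=> [r0 t t' e|c]; [rewrite (h1 _ t' t) | rewrite h2].
Qed.

Lemma realize_cap n n' (chi : 'I_n -> 'I_j) (chi' : 'I_n' -> 'I_j) (t : seq 'I_n) :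
  capeq chi chi' -> size t <= RR -> exists t' : seq 'I_n', shape chi' t' = shape chi t.
Proof.
move=> ce st; apply: realize => i.
have h1 := ncl_sz chi t i; have h2 := ncl_size chi t i; have h3 := ce i.
lia.
Qed.

Lemma realize_tup n n' (chi : 'I_n -> 'I_j) (chi' : 'I_n' -> 'I_j) (r0 : rsym L) (t : (ar r0).-tuple 'I_n) :
  capeq chi chi' -> exists t' : (ar r0).-tuple 'I_n', shape chi' t' = shape chi t.
Proof.
move=> ce.
have st : size t <= RR by rewrite size_tuple /RR; have := ar_le r0; lia.
have [t' e] := realize_cap ce st.
have sz' : size t' == ar r0.
  by have := congr1 size e; rewrite !size_shape size_tuple => ->.
by exists (Tuple sz').
Qed.

Lemma sz1_eq n (chi : 'I_n -> 'I_j) i x y :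
  sz chi i = 1 -> chi x = i -> chi y = i -> x = y.
Proof.
move=> h hx hy; have : sz chi i <= 1 by rewrite h.
move/card_le1_eqP; apply; by rewrite inE; apply/eqP.
Qed.

Lemma Symm_sz1 n (chi : 'I_n -> 'I_j) (s : fstruct L n) c :
  Symm chi (M s) -> sz chi (chi (s.2 c)) = 1.
Proof.
move=> sym; apply/eqP; rewrite eqn_leq; apply/andP; split.
  apply/card_le1_eqP => x y; rewrite !inE => /eqP hx /eqP hy.
  by rewrite (Symm_cst sym hx) (Symm_cst sym hy).
by apply/card_gt0P; exists (s.2 c); rewrite inE.
Qed.

Lemma capeq1 n n' (chi : 'I_n -> 'I_j) (chi' : 'I_n' -> 'I_j) i :
  capeq chi chi' -> sz chi i = 1 -> sz chi' i = 1.
Proof. move=> /(_ i) ce h; rewrite h /RR in ce; lia. Qed.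

Lemma capeq_pos n n' (chi : 'I_n -> 'I_j) (chi' : 'I_n' -> 'I_j) i :
  capeq chi chi' -> 0 < sz chi i -> 0 < sz chi' i.
Proof. move=> /(_ i) ce h; rewrite /RR in ce; lia. Qed.

Lemma corr_exists n n' (chi : 'I_n -> 'I_j) (chi' : 'I_n' -> 'I_j) (s : fstruct L n) :
  capeq chi chi' -> Symm chi (M s) ->
  exists s' : fstruct L n', Symm chi' (M s') /\ Corr chi chi' s s'.
Proof.
move=> ce sym.
have [f hf] : exists f : csym L -> 'I_n', forall c, chi' (f c) = chi (s.2 c).
  suff h : forall c, exists x : 'I_n', chi' x = chi (s.2 c).
    by have [f hf] := fin_all_exists h; exists f.
  move=> c; have : 0 < sz chi' (chi (s.2 c)) by apply: capeq_pos ce _; rewrite Symm_sz1.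
  by move/card_gt0P => [x]; rewrite inE => /eqP hx; exists x.
pose rl := [ffun a : atom L 'I_n' => asbool (exists t : (ar (tag a)).-tuple 'I_n,
               shape chi t = shape chi' (tagged a) /\ s.1 (mkat t))].
exists (rl, [ffun c => f c]).
have key : forall r0 (t : (ar r0).-tuple 'I_n) (t' : (ar r0).-tuple 'I_n'),
    shape chi t = shape chi' t' -> s.1 (mkat t) = rl (mkat t').
  move=> r0 t t' e; rewrite ffunE /=.
  apply/idP/asboolP => [h|[t0 [e0 h0]]]; first by exists t.
  have e1 : shape chi t0 = shape chi t by rewrite e0 e.
  by have := Symm_shape sym e1; rewrite /= => <-.
split.
  apply: shape_Symm => [r0 t t' e|c x] /=.
    rewrite !ffunE /=; apply: asbool_iff.
    by split=> -[t0 [e0 h0]]; exists t0; rewrite e0 ?e; split.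
  rewrite ffunE hf => hx.
  apply: (sz1_eq (chi := chi') (i := chi (s.2 c))) => //.
  by apply: capeq1 ce _; rewrite Symm_sz1.
by split=> [r0 t t' e|c] /=; [exact: key | rewrite ffunE hf].
Qed.

Lemma corr_unique n n' (chi : 'I_n -> 'I_j) (chi' : 'I_n' -> 'I_j) (s : fstruct L n)
    (s1 s2 : fstruct L n') :
  capeq chi chi' -> Symm chi' (M s1) -> Symm chi' (M s2) ->
  Corr chi chi' s s1 -> Corr chi chi' s s2 -> s1 = s2.
Proof.
move=> ce sym1 sym2 [h1 c1] [h2 c2].
case: s1 sym1 h1 c1 => r1 k1 sym1 h1 c1; case: s2 sym2 h2 c2 => r2 k2 sym2 h2 c2.
congr pair; apply/ffunP.
  case=> r0 t' /=.
  have [t e] := realize_tup t' (capeq_sym ce).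
  by have := h1 r0 t t' e; have := h2 r0 t t' e; rewrite /mkat /= => <- <-.
move=> c; have := c1 c; rewrite c2 => e.
by have := Symm_cst sym1 (c:=c) (x:=k2 c); rewrite /= => -> //; rewrite -e.
Qed.

Lemma corr_trans n n' nt (chi : 'I_n -> 'I_j) (chi' : 'I_n' -> 'I_j) (chit : 'I_nt -> 'I_j)
   s s' (tau : fstruct L nt) :
  capeq chi chit -> Corr chi chit s tau -> Corr chi' chit s' tau -> Corr chi chi' s s'.
Proof.
move=> ce [h1 c1] [h2 c2]; split=> [r0 t t' e|c]; last by rewrite c1 c2.
have [tt et] := realize_tup t ce.
by rewrite (h1 r0 t tt) // (h2 r0 t' tt) // -e.
Qed.

End Corr.

End M4.
Import M4.

Module M5.

Section Valid.
Variable L : lang.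
Variable j : nat.
Local Notation M := (@of_fstruct L _).

Definition Valid n (chi : 'I_n -> 'I_j) (s : fstruct L n) :=
  forall x y, sim (M s) x y -> chi x = chi y.

Lemma corr_valid n n' (chi : 'I_n -> 'I_j) (chi' : 'I_n' -> 'I_j) s s' :
  capeq L chi chi' -> Symm chi (M s) -> Symm chi' (M s') -> Corr chi chi' s s' ->
  Valid chi s -> Valid chi' s'.
Proof.
move=> ce sym sym' [hc cc] val x' y' sxy.
case: (eqVneq (chi' x') (chi' y')) => [//|nc]; exfalso.
have [u eu] : exists u : seq 'I_n, shape chi u = shape chi' [:: x'; y'].
  by apply: realize_cap (capeq_sym ce) _; rewrite /RR /=; lia.
case: u eu => [|x [|y [|? ?]]] eu; try by have := congr1 size eu.
move: eu; rewrite /shape /= => -[cx _ cy _].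
apply: (negP nc); apply/eqP; rewrite -cx -cy; apply: val.
apply/simP; split; first by exists (tperm x y); apply: tpermK.
split.
  case=> r0 t /=.
  have [w' ew] : exists w' : seq 'I_n', shape chi' w' = shape chi (val t ++ [:: x; y]).
    apply: realize_cap ce _; rewrite size_cat size_tuple /RR /=.
    have := ar_le r0; lia.
  have [f [Ef finj fchi]] := shape_inj x' (esym ew).
  have sub : {subset val t <= val t ++ [:: x; y]} by move=> z zt; rewrite mem_cat zt.
  have e1 : shape chi t = shape chi' (map_tuple f t).
    by rewrite /= (shape_map (chi := chi)) // => [u v uy vy|u uy]; [apply: finj; apply: sub | rewrite fchi //; apply: sub].
  have e2 : shape chi (map_tuple (tperm x y) t) = shape chi' (map_tuple (tperm (f x) (f y)) (map_tuple f t)).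
    apply: shape_swap.
    have -> : val (map_tuple f t) ++ [:: f x; f y] = w' by rewrite -Ef map_cat.
    by rewrite ew.
  have h1 := hc r0 _ _ e1; have h2 := hc r0 _ _ e2.
  rewrite /mkat in h1 h2; rewrite h1 h2.
  have xu : x \in val t ++ [:: x; y] by rewrite mem_cat !inE eqxx orbT.
  have yu : y \in val t ++ [:: x; y] by rewrite mem_cat !inE eqxx !orbT.
  have s1 : sim (M s') (f x) (f y).
    apply: (sim_trans (y := x')); first by apply: sym'; rewrite fchi // cx.
    apply: (sim_trans sxy); by apply: sym'; rewrite fchi // cy.
  by move/simP: s1 => [_ [h _]]; exact: (h (mkat (map_tuple f t))).
move=> c /=.
have ne : forall z, z = s.2 c -> chi' (s'.2 c) = chi z by move=> z ->; rewrite cc.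
case: (eqVneq x (s.2 c)) => [ex|nx].
  have ex' : x' = s'.2 c by apply: (Symm_cst sym'); rewrite /= -cx (ne _ ex).
  move/simP: sxy => [_ [_ /(_ c)]]; rewrite /= -ex' tpermL => ey.
  by move: nc; rewrite ey eqxx.
case: (eqVneq y (s.2 c)) => [ey|ny].
  have ey' : y' = s'.2 c by apply: (Symm_cst sym'); rewrite /= -cy (ne _ ey).
  move/simP: sxy => [_ [_ /(_ c)]]; rewrite /= -ey' tpermR => ex.
  by move: nc; rewrite ex eqxx.
by rewrite tpermD // eq_sym.
Qed.

End Valid.

End M5.
Import M5.

Module M6.

Section Down.
Variable L : lang.
Variable j : nat.
Variable H : property L.
Variable hH : hereditary H.
Local Notation M := (@of_fstruct L _).

Lemma inj_class n n' (chi : 'I_n -> 'I_j) (chi' : 'I_n' -> 'I_j) :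
  (forall i, sz chi i <= sz chi' i) ->
  exists g : 'I_n -> 'I_n', injective g /\ forall x, chi' (g x) = chi x.
Proof.
move=> le.
case: n chi le => [|n] chi le.
  have g : 'I_0 -> 'I_n' by case=> m; rewrite ltn0.
  by exists g; split; case.
have [t' e] : exists t' : seq 'I_n', shape chi' t' = shape chi (enum 'I_n.+1).
  by apply: realize => i; apply: leq_trans (le i); apply: ncl_sz.
have [x0 _] : exists x0 : 'I_n', chi' x0 == chi ord0.
  have : 0 < sz chi' (chi ord0).
    by apply: leq_trans (le _); apply/card_gt0P; exists ord0; rewrite inE.
  by move/card_gt0P => [x]; rewrite inE => hx; exists x.
have [g [_ ginj gchi]] := shape_inj x0 (esym e).
exists g; split; first by move=> x y; apply: ginj; rewrite mem_enum.
by move=> x; apply: gchi; rewrite mem_enum.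
Qed.

Lemma down_H n n' (chi : 'I_n -> 'I_j) (chi' : 'I_n' -> 'I_j) (s : fstruct L n) (s' : fstruct L n') :
  (forall i, sz chi i <= sz chi' i) ->
  Symm chi (M s) -> Symm chi' (M s') -> Corr chi chi' s s' -> H (M s') -> H (M s).
Proof.
move=> le sym sym' [hc cc] Hs'.
have [g [ginj gchi]] := inj_class le.
pose Pb := fun y : 'I_n' => [exists x, g x == y].
have gc : forall c, g (s.2 c) = s'.2 c.
  move=> c; apply: (sz1_eq (chi := chi') (i := chi' (s'.2 c))) => //; first by rewrite Symm_sz1.
  by rewrite gchi cc.
have Pc : forall c, Pb (s'.2 c) by move=> c; apply/existsP; exists (s.2 c); rewrite gc.
pose N := Struct (fun a : atom L {y | Pb y} => s'.1 (map_atom val a))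
                 (fun c => exist (fun y => Pb y) (s'.2 c) (Pc c)).
have ind : @induced L _ (M s') (fun y => Pb y) N by split.
have HN : H N := hH.2 _ (M s') (fun y => Pb y) N Hs' ind.
have exP : forall y : {y | Pb y}, exists x, g x == val y by case=> y /=; rewrite /Pb => /existsP.
pose h := fun y : {y | Pb y} => xchoose (exP y).
have gh : forall y, g (h y) = val y by move=> y; have /eqP := xchooseP (exP y).
have Pg : forall x, Pb (g x) by move=> x; apply/existsP; exists x.
pose k := fun x => exist (fun y => Pb y) (g x) (Pg x).
have hk : cancel h k by move=> y; apply: val_inj; rewrite /= gh.
have kh : cancel k h by move=> x; apply: ginj; rewrite gh.
apply: (hH.1 _ _ N (M s) h HN).
split; first by exists k.
split=> [[r0 t]|c] /=.
  have -> : map_atom val (Tagged (fun r => (ar r).-tuple {y | Pb y}) t)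
          = map_atom g (map_atom h (Tagged (fun r => (ar r).-tuple {y | Pb y}) t)).
    by rewrite map_atom_comp; apply: map_atom_ext => y /=; rewrite gh.
  rewrite /map_atom /=.
  apply: hc; apply: esym; apply: shape_map => // u v _ _; exact: ginj.
by apply: ginj; rewrite gh gc.
Qed.

End Down.

End M6.
Import M6.

Module M7.

Lemma tail_min (a : nat -> nat) k : exists l, k <= l /\ forall l', k <= l' -> a l <= a l'.
Proof.
have ex : exists v, asbool (exists l, k <= l /\ a l = v) by exists (a k); apply/asboolP; exists k.
case: (ex_minnP ex) => v /asboolP [l [kl av]] vmin.
exists l; split => // l' kl'; rewrite av; apply: vmin; apply/asboolP; by exists l'.
Qed.

Lemma mono_sub (a : nat -> nat) :
  exists phi : nat -> nat, (forall k, phi k < phi k.+1) /\ (forall k, a (phi k) <= a (phi k.+1)).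
Proof.
have [am ham] : exists am : nat -> nat, forall k, k <= am k /\ forall l', k <= l' -> a (am k) <= a l'.
  exists (fun k => epsilon (inhabits 0) (fun l => k <= l /\ forall l', k <= l' -> a l <= a l')).
  by move=> k; exact: (epsilon_spec _ _ (tail_min a k)).
pose fix phi k := if k is k'.+1 then am (phi k').+1 else am 0.
exists phi; split => k /=.
  by have [h _] := ham (phi k).+1.
have [h1 _] := ham (phi k).+1.
have [T [eT hT]] : exists T, phi k = am T /\ T <= phi k.
  case: (k) => [|k']; [exists 0 | exists (phi k').+1]; split => //.
  by have [] := ham (phi k').+1.
rewrite {1}eT; have [_ h3] := ham T; apply: h3; lia.
Qed.

Section Dickson.
Variable j : nat.
Definition vle (u v : 'I_j -> nat) := forall i, u i <= v i.

Lemma good_coords (cs : seq 'I_j) (U : nat -> 'I_j -> nat) :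
  exists phi : nat -> nat, (forall k, phi k < phi k.+1) /\
     (forall c, c \in cs -> forall k, U (phi k) c <= U (phi k.+1) c).
Proof.
elim: cs => [|c cs [phi [hinc hmon]]].
  by exists id; split.
have [psi [pinc pmon]] := mono_sub (fun k => U (phi k) c).
exists (phi \o psi); split => [k|c'] /=.
  exact: (homo_ltn (f := phi) (r := fun a b => a < b) ltn_trans hinc (pinc k)).
rewrite inE => /orP [/eqP ->|c'cs] k; first exact: pmon.
have hm := homo_leq (f := fun k => U (phi k) c') (r := leq) leqnn leq_trans (hmon c' c'cs).
by apply: hm; apply: ltnW.
Qed.

Lemma good (U : nat -> 'I_j -> nat) : exists k l, k < l /\ vle (U k) (U l).
Proof.
have [phi [hinc hmon]] := good_coords (enum 'I_j) U.
by exists (phi 0), (phi 1); split => // i; apply: hmon; rewrite mem_enum.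
Qed.

Definition downset (D : ('I_j -> nat) -> Prop) := forall u v, vle u v -> D v -> D u.

Definition capv (B : nat) (u : 'I_j -> nat) := fun i => minn (u i) B.

Lemma basis (D : ('I_j -> nat) -> Prop) : downset D ->
  exists (m : nat) (F : nat -> 'I_j -> nat),
    (forall k, k < m -> ~ D (F k)) /\ (forall u, ~ D u -> exists2 k, k < m & vle (F k) u).
Proof.
move=> dD.
pose P (l : seq ('I_j -> nat)) := exists u, ~ D u /\ forall k, k < size l -> ~ vle (nth (fun _ => 0) l k) u.
pose ch (l : seq ('I_j -> nat)) := epsilon (inhabits (fun _ => 0))
   (fun u => ~ D u /\ forall k, k < size l -> ~ vle (nth (fun _ => 0) l k) u).
have chP : forall l, P l -> ~ D (ch l) /\ forall k, k < size l -> ~ vle (nth (fun _ => 0) l k) (ch l).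
  by move=> l pl; exact: (epsilon_spec _ _ pl).
pose fix lst m := if m is m'.+1 then rcons (lst m') (ch (lst m')) else [::].
have szl : forall m, size (lst m) = m by elim=> //= m ih; rewrite size_rcons ih.
have nthl : forall m k, k < m -> nth (fun _ => 0) (lst m) k = ch (lst k).
  elim=> // m ih k; rewrite ltnS leq_eqVlt => /orP [/eqP ->|km] /=.
    by rewrite nth_rcons szl ltnn eqxx.
  by rewrite nth_rcons szl km ih.
have [m nPm] : exists m, ~ P (lst m).
  apply: NNPP => hall.
  have allP : forall m, P (lst m) by move=> m; apply: NNPP => h; apply: hall; exists m.
  have [k [l [kl hv]]] := good (fun m => ch (lst m)).
  have [_ h] := chP _ (allP l).
  by apply: (h k); rewrite ?szl // nthl.
have ex : exists m, asbool (~ P (lst m)) by exists m; apply/asboolP.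
case: (ex_minnP ex) => m0 /asboolP nP0 min0.
exists m0, (fun k => ch (lst k)); split.
  move=> k km; have : P (lst k).
    apply: NNPP => h; have := min0 k (introT (asboolP _) h); lia.
  by move/chP => [].
move=> u nDu; apply: NNPP => hn; apply: nP0; exists u; split => // k.
by rewrite szl => km hv; apply: hn; exists k => //; rewrite -(nthl m0).
Qed.

Lemma dickson (D : ('I_j -> nat) -> Prop) : downset D ->
  exists B, forall u, D u <-> D (capv B u).
Proof.
move=> dD; have [m [F [FU Fgen]]] := basis dD.
exists (\max_(k < m) \max_(i : 'I_j) F k i) => u; split.
  by apply: dD => i; rewrite /capv geq_minl.
move=> hc; apply: NNPP => hu.
have [k km hv] := Fgen u hu.
apply: (FU k km); apply: dD hc => i; rewrite /capv leq_min hv.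
apply: leq_trans (leq_bigmax (F := fun k : 'I_m => \max_(i : 'I_j) F k i) (Ordinal km)).
exact: (leq_bigmax (F := fun i => F k i)).
Qed.

End Dickson.

End M7.
Import M7.

Module M8.

Lemma arith_step n T Q :
  Q * (n ^_ T * Q ^ (n - T)) + T * (n ^_ T.-1 * Q ^ (n - T.-1)) = n.+1 ^_ T * Q ^ (n.+1 - T).
Proof.
case: T => [|T] /=; first by rewrite !ffactn0 !subn0 mul0n addn0 expnS; lia.
rewrite ffactSS subSS.
case: (ltngtP n T) => [nT|Tn|<-].
- by rewrite !ffact_small //; lia.
- have e : n - T = (n - T.+1).+1 by lia.
  rewrite ffactnSr e expnS.
  have e2 : n - T.+1 + T.+1 = n by lia.
  set a := n ^_ T; set b := Q ^ (n - T.+1).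
  rewrite -e.
  have -> : n - T = (n - T.+1).+1 by lia.
  nia.
- by rewrite (ffact_small (ltnSn n)) subnn !expn0; lia.
Qed.

Section KC.
Variable j : nat.

Definition condo (o : option nat) (t : nat) := if o is Some b then t == b else true.
Definition NN (th : 'I_j -> option nat) n :=
  \sum_(chi : {ffun 'I_n -> 'I_j}) [forall i, condo (th i) (sz chi i)].
Definition PP (th : 'I_j -> option nat) := \prod_(i < j) (if th i is Some t then t`! else 1).
Definition TT (th : 'I_j -> option nat) := \sum_(i < j) (if th i is Some t then t else 0).
Definition QQ (th : 'I_j -> option nat) := \sum_(i < j) (th i == None).

Lemma sz_sum n (chi : 'I_n -> 'I_j) i : sz chi i = \sum_(x < n) (chi x == i).
Proof. by rewrite /sz -sum1_card big_mkcond. Qed.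

Definition ext n (chi : {ffun 'I_n -> 'I_j}) (v : 'I_j) : {ffun 'I_n.+1 -> 'I_j} :=
  [ffun x => if unlift ord0 x is Some y then chi y else v].

Lemma sz_ext n (chi : {ffun 'I_n -> 'I_j}) v i : sz (ext chi v) i = (v == i) + sz chi i.
Proof.
rewrite !sz_sum big_ord_recl /ext ffunE unlift_none; congr (_ + _).
by apply: eq_bigr => x _; rewrite ffunE liftK.
Qed.

Lemma sum_ffunS n (F : {ffun 'I_n.+1 -> 'I_j} -> nat) :
  \sum_(chi : {ffun 'I_n.+1 -> 'I_j}) F chi =
  \sum_(v : 'I_j) \sum_(chi : {ffun 'I_n -> 'I_j}) F (ext chi v).
Proof.
rewrite pair_bigA /= (reindex (fun p : 'I_j * {ffun 'I_n -> 'I_j} => ext p.2 p.1)) //.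
exists (fun chi : {ffun 'I_n.+1 -> 'I_j} => (chi ord0, [ffun y : 'I_n => chi (lift ord0 y)])) => [[v chi] _|chi _] /=.
  congr pair; first by rewrite /ext ffunE unlift_none.
  by apply/ffunP => y; rewrite !ffunE liftK.
apply/ffunP => x; rewrite /ext !ffunE.
by case: unliftP => [y ->|->]; rewrite ?ffunE.
Qed.

Definition upd (th : 'I_j -> option nat) v o := fun i => if i == v then o else th i.

Lemma NN_step n th v :
  \sum_(chi : {ffun 'I_n -> 'I_j}) [forall i, condo (th i) (sz (ext chi v) i)] =
  if th v is Some t then (if t is t'.+1 then NN (upd th v (Some t')) n else 0) else NN th n.
Proof.
case E: (th v) => [[|t']|].
- rewrite big1 // => chi _.
  by case: forallP => [/(_ v)|//]; rewrite E /= sz_ext eqxx add1n.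
- apply: eq_bigr => chi _; congr (nat_of_bool _); apply: eq_forallb => i.
  rewrite /upd sz_ext; case: (eqVneq i v) => [->|niv]; first by rewrite E /= add1n eqSS.
  by rewrite add0n.
- apply: eq_bigr => chi _; congr (nat_of_bool _); apply: eq_forallb => i.
  rewrite sz_ext; case: (eqVneq i v) => [->|niv]; first by rewrite E.
  by rewrite add0n.
Qed.

Lemma upd_PP th v t : th v = Some t.+1 -> PP th = t.+1 * PP (upd th v (Some t)).
Proof.
move=> E; rewrite /PP (bigD1 v) //= [in RHS](bigD1 v) //= E /upd eqxx factS mulnA.
congr (_ * _); apply: eq_bigr => i niv; by rewrite (negbTE niv).
Qed.

Lemma upd_TT th v t : th v = Some t.+1 -> TT th = (TT (upd th v (Some t))).+1.
Proof.
move=> E; rewrite /TT (bigD1 v) //= [in RHS](bigD1 v) //= E /upd eqxx addSn.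
congr (_ + _).+1; apply: eq_bigr => i niv; by rewrite (negbTE niv).
Qed.

Lemma upd_QQ th v t : th v = Some t.+1 -> QQ (upd th v (Some t)) = QQ th.
Proof.
move=> E; apply: eq_bigr => i _; rewrite /upd.
by case: (eqVneq i v) => [->|]; rewrite ?E.
Qed.

Lemma KC n th : NN th n * PP th = n ^_ (TT th) * QQ th ^ (n - TT th).
Proof.
elim: n th => [|n IH] th.
  have e : NN th 0 = [forall i, condo (th i) 0].
    rewrite /NN (eq_bigr (fun _ => nat_of_bool [forall i, condo (th i) 0])); last first.
      by move=> chi _; congr (nat_of_bool _); apply: eq_forallb => i; rewrite sz_sum big_ord0.
    by rewrite sum_nat_const card_ffun !card_ord expn0 mul1n.
  rewrite e sub0n expn0 muln1.
  case: forallP => h.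
    have T0 : TT th = 0.
      by rewrite /TT big1 // => i _; have := h i; case: (th i) => [t /= /eqP ->|].
    rewrite T0 ffactn0 mul1n /PP big1 // => i _; have := h i.
    by case: (th i) => [t /= /eqP <-|].
  have [i hi] : exists i, ~~ condo (th i) 0.
    by apply/existsP; rewrite -negb_forall; apply/forallP.
  rewrite mul0n ffact0n.
  suff : 0 < TT th by case: (TT th).
  have : (if th i is Some t then t else 0) <= TT th by rewrite /TT (bigD1 i) //= leq_addr.
  move: hi; case: (th i) => [t /= ht|//].
  by apply: leq_trans; rewrite lt0n eq_sym.
rewrite /NN sum_ffunS.
rewrite (eq_bigr (fun v => if th v is Some t then (if t is t'.+1 then NN (upd th v (Some t')) n else 0) else NN th n)); last by move=> v _; exact: NN_step.
rewrite big_distrl /=.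
rewrite (eq_bigr (fun v => (th v == None) * (n ^_ TT th * QQ th ^ (n - TT th)) +
    (if th v is Some t then t else 0) * (n ^_ (TT th).-1 * QQ th ^ (n - (TT th).-1)))); last first.
  move=> v _; case E: (th v) => [[|t]|] /=.
  - by rewrite mul0n.
  - rewrite (upd_PP E) (upd_TT E) /= -(upd_QQ E) mulnCA IH.
    by rewrite mul0n add0n.
  - by rewrite IH mul1n mul0n addn0.
rewrite big_split /= -!big_distrl /=.
exact: arith_step.
Qed.

End KC.

End M8.
Import M8.

Module M9.
Import GRing.Theory Num.Theory.
Local Open Scope ring_scope.

Definition EP (u : nat -> rat) := exists (k : nat) (p : nat -> {poly rat}) (N : nat),
  forall n, (N <= n)%N -> u n = \sum_(i < k) (p i).[n%:R] * (i.+1)%:R ^+ n.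

Lemma EP_ev u v : EP u -> (exists N, forall n, (N <= n)%N -> u n = v n) -> EP v.
Proof.
move=> [k [p [N hp]]] [N' huv]; exists k, p, (maxn N N') => n hn.
by rewrite -huv ?hp //; lia.
Qed.

Lemma EP_ev0 u : (exists N, forall n, (N <= n)%N -> u n = 0) -> EP u.
Proof. by move=> [N h]; exists 0%N, (fun _ => 0), N => n hn; rewrite big_ord0 h. Qed.

Lemma EP_add u v : EP u -> EP v -> EP (fun n => u n + v n).
Proof.
move=> [k1 [p1 [N1 h1]]] [k2 [p2 [N2 h2]]].
exists (maxn k1 k2), (fun i => (if (i < k1)%N then p1 i else 0) + (if (i < k2)%N then p2 i else 0)), (maxn N1 N2).
move=> n hn; rewrite h1 ?h2; try lia.
rewrite (big_ord_widen (maxn k1 k2) (fun i => (p1 i).[n%:R] * (i.+1)%:R ^+ n)) ?leq_maxl //.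
rewrite (big_ord_widen (maxn k1 k2) (fun i => (p2 i).[n%:R] * (i.+1)%:R ^+ n)) ?leq_maxr //.
rewrite !(big_mkcond (fun i : 'I_(maxn k1 k2) => (i < _)%N)) -big_split /=.
apply: eq_bigr => i _; rewrite hornerD mulrDl.
by congr (_ + _); case: ifP; rewrite ?horner0 ?mul0r.
Qed.

Lemma EP_scale c u : EP u -> EP (fun n => c * u n).
Proof.
move=> [k [p [N h]]]; exists k, (fun i => c *: p i), N => n hn.
by rewrite h // mulr_sumr; apply: eq_bigr => i _; rewrite hornerZ mulrA.
Qed.

Lemma EP_sum (I : finType) (F : I -> nat -> rat) :
  (forall i, EP (F i)) -> EP (fun n => \sum_(i : I) F i n).
Proof.
move=> hF.
suff : forall s : seq I, EP (fun n => \sum_(i <- s) F i n).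
  by move/(_ (enum I)) => h; apply: EP_ev h _; exists 0%N => n _; rewrite big_enum.
elim=> [|x s IH]; first by apply: EP_ev0; exists 0%N => n _; rewrite big_nil.
apply: EP_ev (EP_add (hF x) IH) _; exists 0%N => n _; by rewrite big_cons.
Qed.

Lemma EP_geo (P : {poly rat}) (q : nat) : (1 <= q)%N -> EP (fun n => P.[n%:R] * q%:R ^+ n).
Proof.
move=> q1; exists q, (fun i => if i == q.-1 then P else 0), 0%N => n _.
have qlt : (q.-1 < q)%N by lia.
rewrite (bigD1 (Ordinal qlt)) //= eqxx big1 ?addr0; last first.
  move=> i /eqP ni; case: ifP => [/eqP e|_]; last by rewrite horner0 mul0r.
  by exfalso; apply: ni; apply: val_inj.
by rewrite prednK //; lia.
Qed.

Definition FFp (T : nat) : {poly rat} := \prod_(u < T) ('X - u%:R%:P).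

Lemma FFpE T n : (n ^_ T)%:R = (FFp T).[n%:R] :> rat.
Proof.
elim: T => [|T IH]; first by rewrite ffactn0 /FFp big_ord0 hornerC.
rewrite /FFp big_ord_recr /= hornerM -/(FFp T) -IH hornerXsubC ffactnSr natrM.
case: (leqP T n) => [Tn|nT]; first by rewrite natrB.
by rewrite ffact_small // !mul0r.
Qed.

Section CC.
Variable j : nat.

Lemma PP_gt0 th : (0 < PP (j:=j) th)%N.
Proof.
rewrite /PP; elim/big_rec: _ => // i x _ hx; rewrite muln_gt0 hx andbT.
by case: (th i) => [t|]; rewrite ?fact_gt0.
Qed.

Lemma EP_NN th : EP (fun n => (NN (j:=j) th n)%:R).
Proof.
have hP := PP_gt0 th.
have e : forall n, (NN th n)%:R = (n ^_ TT th)%:R * (QQ th ^ (n - TT th))%:R / (PP th)%:R :> rat.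
  move=> n; rewrite -natrM -KC natrM mulfK //; by rewrite pnatr_eq0 -lt0n.
case: (posnP (QQ th)) => [Q0|Qp].
  apply: EP_ev0; exists (TT th).+1 => n hn.
  rewrite e Q0 exp0n ?mulr0 ?mul0r //; lia.
pose c : rat := ((PP th)%:R * (QQ th)%:R ^+ TT th)^-1.
apply: EP_ev (EP_geo (c *: FFp (TT th)) Qp) _; exists (TT th) => n hn.
rewrite e hornerZ -FFpE /c.
have hQ : (QQ th)%:R ^+ n = (QQ th)%:R ^+ (n - TT th) * (QQ th)%:R ^+ (TT th) :> rat.
  by rewrite -exprD subnK.
rewrite hQ natrX.
have q0 : (QQ th)%:R ^+ TT th != 0 :> rat by rewrite expf_neq0 // pnatr_eq0 -lt0n.
have p0 : (PP th)%:R != 0 :> rat by rewrite pnatr_eq0 -lt0n.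
by field; rewrite q0 p0.
Qed.

Lemma EP_CC (g : 'I_j -> nat -> nat) (B : nat) :
  (forall i t, (B <= t)%N -> g i t = g i B) ->
  EP (fun n => \sum_(chi : {ffun 'I_n -> 'I_j}) \prod_(i < j) (g i (sz chi i))%:R).
Proof.
move=> hg.
pose w (i : 'I_j) (b : 'I_B.+1) : rat := if (b < B)%N then (g i b)%:R - (g i B)%:R else (g i B)%:R.
pose cd (b : 'I_B.+1) (t : nat) : bool := if (b < B)%N then t == b else true.
have eg : forall i t, (g i t)%:R = \sum_(b : 'I_B.+1) w i b * (cd b t)%:R.
  move=> i t; rewrite big_ord_recr /= /w /cd /= ltnn mulr1.
  case: (ltnP t B) => tB.
    rewrite (bigD1 (Ordinal tB)) //= tB eqxx mulr1 big1 ?addr0 ?subrK //.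
    move=> b /eqP nb; rewrite (ltn_ord b) /=.
    case: eqP => [e|_]; last by rewrite mulr0.
    by exfalso; apply: nb; apply: val_inj.
  rewrite big1 ?add0r ?hg //.
  move=> b _; rewrite (ltn_ord b).
  case: eqP => [e|_]; last by rewrite mulr0.
  by move: (ltn_ord b); rewrite -e ltnNge tB.
pose th' (th : {ffun 'I_j -> 'I_B.+1}) := fun i => if (th i < B)%N then Some (nat_of_ord (th i)) else None.
have E : forall n, \sum_(chi : {ffun 'I_n -> 'I_j}) \prod_(i < j) (g i (sz chi i))%:R =
    \sum_(th : {ffun 'I_j -> 'I_B.+1}) (\prod_(i < j) w i (th i)) * (NN (th' th) n)%:R.
  move=> n.
  under eq_bigr => chi _ do under eq_bigr => i _ do rewrite eg.
  under eq_bigr => chi _ do rewrite bigA_distr_bigA /=.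
  rewrite exchange_big /=; apply: eq_bigr => th _.
  rewrite /NN natr_sum mulr_sumr; apply: eq_bigr => chi _.
  rewrite big_split /=; congr (_ * _).
  case: forallP => h /=.
    rewrite big1 // => i _; have := h i; rewrite /th' /cd /condo.
    by case: ifP => // _ ->.
  have [i hi] : exists i, ~~ condo (th' th i) (sz chi i).
    by apply/existsP; rewrite -negb_forall; apply/forallP.
  rewrite (bigD1 i) //= (_ : (cd (th i) (sz chi i))%:R = 0) ?mul0r //.
  by move: hi; rewrite /th' /cd /condo; case: ifP => // _ /negbTE ->.
have h : EP (fun n => \sum_(th : {ffun 'I_j -> 'I_B.+1}) (\prod_(i < j) w i (th i)) * (NN (th' th) n)%:R).
  by apply: EP_sum => th; apply: EP_scale; exact: EP_NN.
by apply: EP_ev h _; exists 0%N => n _; rewrite E.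
Qed.

End CC.

End M9.
Import M9.

Module M10.

Lemma card_setE (T : finType) (b : pred T) : #|[set x | b x]| = \sum_x b x.
Proof. by rewrite -sum1_card big_mkcond; apply: eq_bigr => x _; rewrite inE; case: (b x). Qed.

Lemma card_rel (A B : finType) (PA : A -> Prop) (PB : B -> Prop) (Rl : A -> B -> Prop) :
  (forall a, PA a -> exists b, PB b /\ Rl a b) ->
  (forall b, PB b -> exists a, PA a /\ Rl a b) ->
  (forall a b b', PA a -> PB b -> PB b' -> Rl a b -> Rl a b' -> b = b') ->
  (forall a a' b, PA a -> PA a' -> PB b -> Rl a b -> Rl a' b -> a = a') ->
  #|[set a | asbool (PA a)]| = #|[set b | asbool (PB b)]|.
Proof.
move=> h1 h2 u1 u2.
case: (pickP (fun _ : B => true)) => [b0 _|B0]; last first.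
  have e1 : [set a | asbool (PA a)] = set0.
    apply/setP => a; rewrite !inE; apply/negbTE/asboolP => pa.
    by have [b _] := h1 a pa; move: (B0 b).
  have e2 : [set b | asbool (PB b)] = set0 by apply/setP => b; move: (B0 b).
  by rewrite e1 e2 !cards0.
have [f hf] : exists f : A -> B, forall a, PA a -> PB (f a) /\ Rl a (f a).
  suff : forall a, exists b, PA a -> PB b /\ Rl a b.
    by case/fin_all_exists => f hf; exists f.
  move=> a; case: (classic (PA a)) => [pa|npa]; last by exists b0.
  by have [b hb] := h1 a pa; exists b.
have -> : [set b | asbool (PB b)] = f @: [set a | asbool (PA a)].
  apply/setP => b; rewrite inE; apply/asboolP/imsetP.
    move=> pb; have [a [pa r]] := h2 b pb; exists a; first by rewrite inE; apply/asboolP.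
    by have [pf rf] := hf a pa; apply: (u1 a) => //.
  by case=> a; rewrite inE => /asboolP pa ->; exact: (hf a pa).1.
rewrite card_in_imset // => a a'; rewrite !inE => /asboolP pa /asboolP pa' e.
have [pf rf] := hf a pa; have [pf' rf'] := hf a' pa'.
by apply: (u2 a a' (f a)) => //; rewrite e.
Qed.

Section Classes.
Variable L : lang.
Variable n : nat.
Variable s : fstruct L n.
Local Notation M := (@of_fstruct L _).

Definition rep (x : 'I_n) : 'I_n := [arg min_(y < x | asbool (sim (M s) x y)) (val y)].

Lemma rep_spec x : sim (M s) x (rep x) /\ forall y, sim (M s) x y -> (rep x <= y)%N.
Proof.
rewrite /rep; case: arg_minnP => [|y /asboolP h hmin]; first by apply/asboolP; exact: sim_refl.
by split=> // z hz; apply: hmin; apply/asboolP.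
Qed.

Lemma rep_eq x y : sim (M s) x y -> rep x = rep y.
Proof.
move=> hxy; have [hx mx] := rep_spec x; have [hy my] := rep_spec y.
apply: val_inj; apply/eqP; rewrite eqn_leq; apply/andP; split.
  by apply: mx; apply: sim_trans hxy hy.
by apply: my; apply: sim_trans (sim_sym hxy) hx.
Qed.

Definition isrep x := rep x == x.
Definition Rs := {x : 'I_n | isrep x}.

Lemma rep_isrep x : isrep (rep x).
Proof. by apply/eqP; apply: rep_eq; apply: sim_sym; have [] := rep_spec x. Qed.

Definition rp x : Rs := exist _ (rep x) (rep_isrep x).

Variable j : nat.

Definition cls (chi : {ffun 'I_n -> 'I_j}) :=
  (forall i, exists x, chi x = i) /\ forall x y, chi x = chi y <-> sim (M s) x y.

Lemma count_cls : #|[set chi | asbool (cls chi)]| = if #|{: Rs}| == j then j`! else 0.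
Proof.
rewrite (card_rel (PB := fun psi : {ffun Rs -> 'I_j} => injective psi /\ forall i, exists a, psi a = i)
                  (Rl := fun (chi : {ffun 'I_n -> 'I_j}) (psi : {ffun Rs -> 'I_j}) => forall a : Rs, chi (val a) = psi a)).
- case: eqP => [cj|cj].
    have -> : j`! = #|{: 'I_j}| ^_ #|{: Rs}| by rewrite card_ord cj ffactnn.
    rewrite -card_inj_ffuns; congr #|pred_of_set _|.
    apply/setP => psi; rewrite !inE; apply/asboolP/injectiveP => [[]//|inj]; split => // i.
    have bij : bijective psi by apply: (inj_card_bij inj); rewrite card_ord cj.
    by case: bij => g _ gK; exists (g i); rewrite gK.
  apply/eqP; rewrite cards_eq0; apply/eqP/setP => psi; rewrite !inE.
  apply/asboolP => -[inj sur]; apply: cj; apply/eqP; rewrite eqn_leq.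
  have := leq_card _ inj; rewrite card_ord => ->.
  have [g hg] := fin_all_exists sur.
  have ginj : injective g by move=> a b e; rewrite -(hg a) -(hg b) e.
  by have := leq_card _ ginj; rewrite card_ord.
- move=> chi [sur cl]; exists [ffun a => chi (val a)]; split=> [|a]; last by rewrite ffunE.
  split.
    move=> a b; rewrite !ffunE => /cl h; case: a b h => [a ra] [b rb] /= h.
    by apply: val_inj => /=; rewrite -(eqP ra) -(eqP rb); apply: rep_eq.
  move=> i; have [x hx] := sur i; exists (rp x); rewrite ffunE /= -hx.
  by apply/cl/sim_sym; have [] := rep_spec x.
- move=> psi [inj sur]; exists [ffun x => psi (rp x)]; split; last first.
    by move=> a; rewrite ffunE; congr (psi _); apply: val_inj; apply/eqP; exact: (valP a).
  split.
    by move=> i; have [a ha] := sur i; exists (val a); rewrite ffunE -ha; congr (psi _); apply: val_inj; apply/eqP; exact: (valP a).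
  move=> x y; rewrite !ffunE; split.
    move/inj => /(congr1 val) /= e.
    have [hx _] := rep_spec x; have [hy _] := rep_spec y.
    by apply: sim_trans hx _; rewrite e; apply: sim_sym.
  by move/rep_eq => e; congr (psi _); apply: val_inj.
- move=> chi psi psi' _ _ _ h h'; apply/ffunP => a; by rewrite -h -h'.
- move=> chi chi' psi [_ c] [_ c'] _ h h'; apply/ffunP => x.
  have [hx _] := rep_spec x.
  have e1 : chi x = chi (rep x) by apply/c.
  have e2 : chi' x = chi' (rep x) by apply/c'.
  by rewrite e1 e2 (h (rp x)) (h' (rp x)).
Qed.

End Classes.

End M10.
Import M10.

Module M11.
Import GRing.Theory Num.Theory.

Lemma In_mem (T : eqType) (y : T) (S : seq T) : List.In y S -> y \in S.
Proof. elim: S => [//|z S IH] /= [->|h]; rewrite inE ?eqxx // IH ?orbT //. Qed.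

Section Hdec.
Variable L : lang.
Variable H : property L.
Local Notation M := (@of_fstruct L _).

Lemma cls_bound n (s : fstruct L n) K : at_most_classes (M s) K -> #|{: Rs s}| <= K.
Proof.
case=> S [hS cover].
have [f hf] : exists f : Rs s -> 'I_n, forall a, f a \in S /\ sim (M s) (val a) (f a).
  suff h : forall a : Rs s, exists y, y \in S /\ sim (M s) (val a) y.
    by have [f hf] := fin_all_exists h; exists f.
  by move=> a; have [y [iy hy]] := cover (val a); exists y; split=> //; apply: In_mem.
have finj : injective f.
  move=> a b e; apply: val_inj.
  have [_ ha] := hf a; have [_ hb] := hf b.
  have hab : sim (M s) (val a) (val b) by apply: sim_trans ha _; rewrite e; apply: sim_sym.
  by rewrite -(eqP (valP a)) -(eqP (valP b)); apply: rep_eq.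
rewrite -(card_imset _ finj); apply: leq_trans hS.
apply: leq_trans (card_size S); apply: subset_leq_card.
by apply/subsetP => y /imsetP [a _ ->]; have [] := hf a.
Qed.

Local Open Scope ring_scope.

Lemma sum_cls n (s : fstruct L n) K : (#|{: Rs s}| <= K)%N ->
  \sum_(j < K.+1) (j`!%:R)^-1 * (#|[set chi : {ffun 'I_n -> 'I_j} | asbool (cls s chi)]|)%:R = 1 :> rat.
Proof.
move=> hc.
have hc' : (#|{: Rs s}| < K.+1)%N by [].
have f0 : (#|{: Rs s}|`!%:R : rat) != 0 by rewrite pnatr_eq0 -lt0n fact_gt0.
rewrite (bigD1 (Ordinal hc')) //= count_cls eqxx mulVf //.
rewrite big1 ?addr0 // => i /eqP ni; rewrite count_cls; case: eqP => e; last by rewrite mulr0.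
by exfalso; apply: ni; apply: val_inj.
Qed.

Definition Gj n j (chi : {ffun 'I_n -> 'I_j}) :=
  #|[set s : fstruct L n | asbool (H (M s) /\ Symm chi (M s) /\ Valid chi s)]|.

Lemma Hcard_dec K : (forall T (M0 : struct L T), H M0 -> at_most_classes M0 K) -> forall n,
  (Hcard H n)%:R = \sum_(j < K.+1) (j`!%:R)^-1 *
     \sum_(chi : {ffun 'I_n -> 'I_j}) ([forall i, (0 < sz chi i)%N] * Gj chi)%:R :> rat.
Proof.
move=> hb n.
have step : forall (j : nat) (chi : {ffun 'I_n -> 'I_j}),
   ([forall i, (0 < sz chi i)%N] * Gj chi)%N =
   (\sum_(s : fstruct L n) (asbool (H (M s)) * asbool (cls s chi)))%N.
  move=> j chi; rewrite /Gj card_setE big_distrr /=; apply: eq_bigr => s _.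
  case: (asboolP (H (M s))) => hs; last first.
    by rewrite mul0n; case: (asboolP (H (M s) /\ _)) => [[]|]; rewrite ?muln0.
  rewrite mul1n; case: (asboolP (cls s chi)) => [[sur cl]|ncl].
    have -> : [forall i, (0 < sz chi i)%N].
      apply/forallP => i; have [x hx] := sur i; apply/card_gt0P; exists x; by rewrite inE hx.
    case: (asboolP (H (M s) /\ _)) => // -[]; split=> //; split=> [x y /cl //|x y /cl //].
  case: (asboolP (H (M s) /\ _)) => [[_ [sy va]]|]; last by rewrite muln0.
  case: forallP => [sur|]; last by [].
  exfalso; apply: ncl; split.
    by move=> i; have /card_gt0P [x] := sur i; rewrite inE => /eqP; exists x.
  by move=> x y; split=> [/sy|/va].
have e2 : forall j : nat, (j`!%:R)^-1 * \sum_(chi : {ffun 'I_n -> 'I_j}) ([forall i, (0 < sz chi i)%N] * Gj chi)%:R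
   = \sum_(s : fstruct L n) (asbool (H (M s)))%:R *
       ((j`!%:R)^-1 * (#|[set chi : {ffun 'I_n -> 'I_j} | asbool (cls s chi)]|)%:R) :> rat.
  move=> j.
  under eq_bigr => chi _ do rewrite step natr_sum.
  rewrite exchange_big mulr_sumr; apply: eq_bigr => s _.
  rewrite card_setE natr_sum !mulr_sumr; apply: eq_bigr => chi _.
  by rewrite natrM mulrCA.
under eq_bigr => j _ do rewrite e2.
rewrite exchange_big /Hcard card_setE natr_sum; apply: eq_bigr => s _.
rewrite -mulr_sumr.
case: (asboolP (H (M s))) => hs; last by rewrite mul0r.
by rewrite mul1r (sum_cls (cls_bound (hb _ _ hs))).
Qed.

End Hdec.

End M11.
Import M11.

Module M12.

Lemma unif (I : finType) (P : I -> nat -> Prop) :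
  (forall i B B', B <= B' -> P i B -> P i B') -> (forall i, exists B, P i B) ->
  exists B, forall i, P i B.
Proof.
move=> mono ex; have [f hf] := fin_all_exists ex.
exists (\max_i f i) => i; apply: mono (hf i); exact: (leq_bigmax (F := f)).
Qed.

Section Templates.
Variable L : lang.
Variable H : property L.
Variable hH : hereditary H.
Variable j : nat.
Local Notation M := (@of_fstruct L _).
Local Notation B0 := (RR L).

Lemma exists_chi (m : 'I_j -> nat) :
  exists p : {n : nat & {ffun 'I_n -> 'I_j}}, forall i, sz (tagged p) i = m i.
Proof.
pose th := fun i : 'I_j => Some (m i).
have := KC (TT th) th.
have Q0 : QQ th = 0 by rewrite /QQ big1.
rewrite Q0 subnn expn0 muln1 ffactnn => e.
have : 0 < NN th (TT th).
  by rewrite lt0n; apply/eqP => h; move: e; rewrite h mul0n => /esym/eqP; rewrite eqn0Ngt fact_gt0.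
rewrite /NN lt0n => /eqP h; apply: NNPP => hn; apply: h; apply: big1 => chi _.
apply/eqP; rewrite eqb0; apply/forallP => hall; apply: hn.
by exists (Tagged (fun n => {ffun 'I_n -> 'I_j}) chi) => i /=; apply/eqP; exact: hall i.
Qed.

Definition tmpl (m : 'I_j -> nat) : {n : nat & {ffun 'I_n -> 'I_j}} :=
  proj1_sig (constructive_indefinite_description _ (exists_chi m)).
Definition nT m := tag (tmpl m).
Definition chT m : {ffun 'I_(nT m) -> 'I_j} := tagged (tmpl m).
Lemma chT_sz m i : sz (chT m) i = m i.
Proof. exact: (proj2_sig (constructive_indefinite_description _ (exists_chi m))). Qed.

Definition shift (sg u : 'I_j -> nat) := fun i => if sg i == B0 then B0 + u i else sg i.
Definition capB (v : 'I_j -> nat) := fun i => minn (v i) B0.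

Definition D (sg : 'I_j -> nat) (tau : fstruct L (nT sg)) (u : 'I_j -> nat) : Prop :=
  Symm (chT sg) (M tau) /\
  exists n (chi : {ffun 'I_n -> 'I_j}) (s : fstruct L n),
    [/\ forall i, sz chi i = shift sg u i, Symm chi (M s), Corr chi (chT sg) s tau & H (M s)].

Lemma cap_shift (sg u : 'I_j -> nat) (i : 'I_j) : sg i <= B0 -> minn (shift sg u i) B0 = sg i.
Proof. rewrite /shift; case: eqP => [->|/eqP ne] h; lia. Qed.

Lemma D_down (sg : 'I_j -> nat) (tau : fstruct L (nT sg)) : (forall i, sg i <= B0) -> downset (D tau).
Proof.
move=> hs u v huv [symt [n' [chi' [s' [sz' sym' cr' Hs']]]]]; split => //.
have [[n chi] /= hchi] := exists_chi (shift sg u).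
have ce : capeq L chi (chT sg).
  by move=> i; rewrite /= hchi chT_sz cap_shift //; have := hs i; lia.
have [s [syms crs]] := corr_exists (capeq_sym ce) symt.
have crs' := Corr_sym crs.
exists n, chi, s; split => //.
apply: (down_H hH (chi := chi) (s := s) (chi' := chi') (s' := s')) => //.
- by move=> i; rewrite /= hchi sz' /shift; case: ifP => _ //; rewrite leq_add2l.
- exact: corr_trans ce crs' cr'.
Qed.

End Templates.

End M12.
Import M12.

Module M13.

Section Cap.
Variable L : lang.
Variable H : property L.
Variable hH : hereditary H.
Variable j : nat.
Local Notation M := (@of_fstruct L _).
Local Notation B0 := (RR L).

Definition capdet (P : ('I_j -> nat) -> Prop) B := forall u, P u <-> P (capv B u).

Lemma capdet_mono P B B' : B <= B' -> capdet P B -> capdet P B'.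
Proof.
move=> le h u.
have e : capv B (capv B' u) = capv B u by apply: functional_extensionality => i; rewrite /capv; lia.
have := h u; have := h (capv B' u); rewrite e; tauto.
Qed.

Definition sgf (f : {ffun 'I_j -> 'I_B0.+1}) : 'I_j -> nat := fun i => f i.

Lemma unif_capdet : exists B1, forall (f : {ffun 'I_j -> 'I_B0.+1}) (tau : fstruct L (nT (sgf f))),
  capdet (@D L H j (sgf f) tau) B1.
Proof.
apply: (unif (P := fun f B => forall tau : fstruct L (nT (sgf f)), capdet (@D L H j (sgf f) tau) B)).
  by move=> f B B' le h tau; apply: capdet_mono le (h tau).
move=> f.
apply: (unif (P := fun (tau : fstruct L (nT (sgf f))) B => capdet (@D L H j (sgf f) tau) B)).
  by move=> tau B B' le h; apply: capdet_mono le h.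
move=> tau; apply: dickson; apply: D_down => // i.
by rewrite /sgf -ltnS ltn_ord.
Qed.

Definition GG (sg : 'I_j -> nat) (u : 'I_j -> nat) : nat :=
  \sum_(tau : fstruct L (nT sg))
     asbool (Symm (chT sg) (M tau) /\ Valid (chT sg) tau /\ @D L H j sg tau u).
Definition Gfun (v : 'I_j -> nat) := GG (capB L v) (fun i => v i - B0).

Lemma shift_cap (v : 'I_j -> nat) i : shift L (capB L v) (fun i => v i - B0) i = v i.
Proof. rewrite /shift /capB; case: eqP => h; lia. Qed.

Lemma Gj_Gfun n (chi : {ffun 'I_n -> 'I_j}) : Gj H chi = Gfun (fun i => sz chi i).
Proof.
rewrite /Gfun /GG -card_setE /Gj.
set v := fun i => sz chi i.
set sg := capB L v.
have ce : capeq L chi (chT sg).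
  by move=> i; rewrite chT_sz /sg /capB /v; lia.
apply: (card_rel (Rl := fun (s : fstruct L n) (tau : fstruct L (nT sg)) => Corr chi (chT sg) s tau)).
- move=> s [Hs [syms vals]].
  have [tau [symt cr]] := corr_exists ce syms.
  exists tau; split => //; split => //; split; first exact: corr_valid ce syms symt cr vals.
  split => //; exists n, chi, s; split => // i.
  by rewrite shift_cap.
- move=> tau [symt [valt [_ [n0 [chi0 [s0 [sz0 sym0 cr0 H0]]]]]]].
  have [s [syms cr]] := corr_exists (capeq_sym ce) symt.
  have cr' := Corr_sym cr.
  exists s; split => //; split; last first.
    by split => //; exact: corr_valid (capeq_sym ce) symt syms cr valt.
  apply: (down_H hH (chi := chi) (s := s) (chi' := chi0) (s' := s0)) => //.
  - by move=> i; rewrite sz0 shift_cap.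
  - exact: corr_trans ce cr' cr0.
- move=> s tau tau' [_ [syms _]] [symt _] [symt' _] cr cr'.
  exact: corr_unique ce symt symt' cr cr'.
- move=> s s' tau [_ [syms _]] [_ [syms' _]] [symt _] cr cr'.
  exact: corr_unique (capeq_sym ce) syms syms' (Corr_sym cr) (Corr_sym cr').
Qed.

Lemma Gfun_cap : exists C, B0 <= C /\ forall v, Gfun v = Gfun (capv C v).
Proof.
have [B1 hB1] := unif_capdet.
exists (B0 + B1); split; first exact: leq_addr.
move=> v; rewrite /Gfun.
have e1 : capB L (capv (B0 + B1) v) = capB L v.
  by apply: functional_extensionality => i; rewrite /capB /capv; lia.
rewrite e1.
pose f : {ffun 'I_j -> 'I_B0.+1} := [ffun i => inord (minn (v i) B0)].
have e2 : capB L v = sgf f.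
  apply: functional_extensionality => i; rewrite /sgf /f ffunE inordK //.
  by rewrite ltnS geq_minr.
rewrite e2 /GG; apply: eq_bigr => tau _; congr (nat_of_bool _); apply: asbool_iff.
have h := hB1 f tau.
have e3 : capv B1 (fun i => v i - B0) = capv B1 (fun i => capv (B0 + B1) v i - B0).
  by apply: functional_extensionality => i; rewrite /capv; lia.
have := h (fun i => v i - B0); have := h (fun i => capv (B0 + B1) v i - B0).
rewrite -e3; tauto.
Qed.

End Cap.

End M13.
Import M13.

Module M14.
Import GRing.Theory Num.Theory.

Local Open Scope ring_scope.

Lemma sum_cap j (Psi : ('I_j -> nat) -> rat) C :
  EP (fun n => \sum_(chi : {ffun 'I_n -> 'I_j}) Psi (capv C (fun i => sz chi i))).
Proof.
have e : forall n (chi : {ffun 'I_n -> 'I_j}), Psi (capv C (fun i => sz chi i)) =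
   (\sum_(f : {ffun 'I_j -> 'I_C.+1}) Psi (fun i => f i) *
       \prod_(i < j) ((fun (i : 'I_j) t => nat_of_bool (minn t C == f i)) i (sz chi i))%:R)%R.
  move=> n chi.
  pose f0 : {ffun 'I_j -> 'I_C.+1} := [ffun i => inord (minn (sz chi i) C)].
  have vf0 : forall i, nat_of_ord (f0 i) = minn (sz chi i) C.
    by move=> i; rewrite /f0 ffunE inordK // ltnS geq_minr.
  rewrite (bigD1 f0) //= [X in _ + X]big1.
    rewrite GRing.addr0 big1 ?GRing.mulr1.
      by congr Psi; apply: functional_extensionality => i; rewrite vf0.
    by move=> i _; rewrite vf0 eqxx.
  move=> f nf.
  have [i hi] : exists i, f i != f0 i.
    apply: NNPP => h; move/eqP: nf; apply; apply/ffunP => i.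
    by apply/eqP; apply: negbNE; apply/negP => hn; apply: h; exists i.
  rewrite (bigD1 i) //= -vf0.
  have -> : (nat_of_ord (f0 i) == f i) = false.
    by apply/negbTE; apply: contra hi => /eqP e; apply/eqP; apply: val_inj.
  by rewrite GRing.mul0r GRing.mulr0.
have E : forall n, (\sum_(chi : {ffun 'I_n -> 'I_j}) Psi (capv C (fun i => sz chi i)))%R =
    (\sum_(f : {ffun 'I_j -> 'I_C.+1}) Psi (fun i => f i) *
      \sum_(chi : {ffun 'I_n -> 'I_j}) \prod_(i < j)
         ((fun (i : 'I_j) t => nat_of_bool (minn t C == f i)) i (sz chi i))%:R)%R.
  move=> n; under eq_bigr => chi _ do rewrite e.
  rewrite exchange_big; under [RHS]eq_bigr => f _ do rewrite GRing.mulr_sumr; done.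
have h : EP (fun n => (\sum_(f : {ffun 'I_j -> 'I_C.+1}) Psi (fun i => f i) *
      \sum_(chi : {ffun 'I_n -> 'I_j}) \prod_(i < j)
         ((fun (i : 'I_j) t => nat_of_bool (minn t C == f i)) i (sz chi i))%:R)%R).
  have hf : forall f : {ffun 'I_j -> 'I_C.+1}, EP (fun n => Psi (fun i => f i) *
      \sum_(chi : {ffun 'I_n -> 'I_j}) \prod_(i < j)
         ((fun (i : 'I_j) t => nat_of_bool (minn t C == f i)) i (sz chi i))%:R).
    move=> f; apply: EP_scale; apply: (EP_CC (g := fun (i : 'I_j) t => nat_of_bool (minn t C == f i)) (B := C)) => i t ht /=.
    by rewrite minnn (_ : minn t C = C) //; lia.
  exact: (EP_sum hf).
by apply: EP_ev h _; exists 0 => n _; rewrite E.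
Qed.


End M14.
Import M14.

Import GRing.Theory.
Local Open Scope ring_scope.

Theorem mainTheorem4 (L : lang) (H : property L) :
  hereditary H -> basic H -> ~ trivial H ->
  exists (k : nat) (p : 'I_k -> {poly rat}) (N : nat),
    forall n : nat, (N <= n)%N ->
      (Hcard H n)%:R = \sum_(i < k) (p i).[n%:R] * ((i.+1)%:R ^+ n).
Proof.
move=> hH [K hK] _.
suff [k [p [N hp]]] : EP (fun n => (Hcard H n)%:R).
  by exists k, (fun i : 'I_k => p i), N.
have hd := Hcard_dec hK.
have X : forall j : 'I_K.+1, EP (fun n => (j`!%:R)^-1 *
    \sum_(chi : {ffun 'I_n -> 'I_j}) ([forall i, (0 < sz chi i)%N] * Gj H chi)%:R).
  move=> j; apply: EP_scale.
  have [C [hC hG]] := Gfun_cap hH j.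
  pose Psi := fun v : 'I_j -> nat => (([forall i, (0 < v i)%N] : nat) * Gfun H v)%:R : rat.
  apply: EP_ev (sum_cap Psi C) _; exists 0%N => n _; apply: eq_bigr => chi _.
  rewrite /Psi -hG -(Gj_Gfun hH); congr ((_ * _)%:R); congr (nat_of_bool _).
  apply: eq_forallb => i; rewrite /capv.
  have : (2 <= RR L)%N by rewrite /RR; lia.
  lia.
apply: EP_ev (EP_sum X) _; exists 0%N => n _; by rewrite hd.
Qed.
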